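(* Let $\mathcal{B}$ be a bounding family on $[n]^d$ and $f:[n]^d\to\mathbb{R}$. Then $f\in\mathcal{P}(\mathcal{B})$ if and only if $f(x)-f(y)\le d_{\mathcal{B}}(x,y)$ for all $x,y\in[n]^d$.
   Context: A bounding family is a tuple of $2d$ functions $l_1,u_1,\dots,l_d,u_d:[n-1]\to\mathbb{R}$ with $l_r(y)<u_r(y)$. $\mathcal{P}(\mathcal{B})$ is the set of $f:[n]^d\to\mathbb{R}$ with $l_r(x_r)\le f(x+\mathbf{e}_r)-f(x)\le u_r(x_r)$ for all $r\in[d]$ and $x$ with $x_r<n$. For $x,y\in[n]^d$, $$d_{\mathcal{B}}(x,y)=\sum_{r:x_r>y_r}\ \sum_{t=y_r}^{x_r-1}u_r(t)\ -\ \sum_{r:x_r<y_r}\ \sum_{t=x_r}^{y_r-1}l_r(t).$$ *)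

(* Defs.v *)
From mathcomp Require Import all_boot all_order all_algebra.
From mathcomp Require Import reals.
Set Implicit Arguments. Unset Strict Implicit. Unset Printing Implicit Defensive.
Import Order.TTheory GRing.Theory Num.Theory.
Local Open Scope ring_scope.

(* Conventions: [n] = {1,...,n} is encoded 0-based as 'I_n (value k <-> k+1).
   A point of [n]^d is x : {ffun 'I_d -> 'I_n}.
   [n-1] = {1,...,n-1} is encoded 0-based as {t : nat | t < n-1}; bounding
   functions are given as  l u : 'I_d -> nat -> R , only values at t < n.-1 matter. *)

Definition point (n d : nat) := {ffun 'I_d -> 'I_n}.

(* x + e_r, meaningful when x r + 1 < n *)
Definition shift (n d : nat) (x : point n d) (r : 'I_d) : point n d :=
  [ffun s => if s == r then insubd (x r) (x r).+1 else x s].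

Definition bounding_family (R : realType) (n d : nat) (l u : 'I_d -> nat -> R) : Prop :=
  forall (r : 'I_d) (t : nat), (t < n.-1)%N -> l r t < u r t.

Definition in_PB (R : realType) (n d : nat) (l u : 'I_d -> nat -> R)
  (f : point n d -> R) : Prop :=
  forall (r : 'I_d) (x : point n d), (x r < n.-1)%N ->
    l r (x r) <= f (shift x r) - f x <= u r (x r).

Definition dB (R : realType) (n d : nat) (l u : 'I_d -> nat -> R)
  (x y : point n d) : R :=
  \sum_(r < d | (y r < x r)%N) \sum_(y r <= t < x r) u r t
  - \sum_(r < d | (x r < y r)%N) \sum_(x r <= t < y r) l r t.

(* Main.v *)
Require Import Defs.
From mathcomp Require Import all_boot all_order all_algebra.
From mathcomp Require Import reals.
From mathcomp Require Import zify ring lra.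
Import Order.TTheory GRing.Theory Num.Theory.
Local Open Scope ring_scope.

Section S.
Variables (R : realType) (n d : nat) (l u : 'I_d -> nat -> R).

Definition g (r : 'I_d) (a b : nat) : R :=
  \sum_(b <= t < a) u r t - \sum_(a <= t < b) l r t.

Lemma dBE (x y : point n d) : dB l u x y = \sum_r g r (x r) (y r).
Proof.
rewrite /dB (big_mkcond (fun r => (y r < x r)%N)) (big_mkcond (fun r => (x r < y r)%N)) /=.
rewrite -sumrB; apply: eq_bigr => r _; rewrite /g.
have [h|h] := ltnP (y r) (x r); have [h'|h'] := ltnP (x r) (y r); try lia.
- by rewrite (big_geq h') subr0.
- by rewrite (big_geq h) sub0r.
- by rewrite (big_geq h) (big_geq h') subr0.
Qed.

Lemma g_stepu r a b : (b < a)%N -> g r a b = u r b + g r a b.+1.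
Proof.
move=> h; rewrite /g (big_geq (ltnW h)) (big_geq h) (big_ltn h).
by rewrite !subr0.
Qed.

Lemma g_stepl r a b : (a < b)%N -> g r a b = - l r a + g r a.+1 b.
Proof.
move=> h; rewrite /g (big_geq (ltnW h)) (big_geq h) (big_ltn h).
by rewrite !sub0r opprD.
Qed.

Lemma g_aa r a : g r a a = 0.
Proof. by rewrite /g !big_geq // subr0. Qed.

Lemma shiftE (x : point n d) r s : (x r < n.-1)%N ->
  nat_of_ord (shift x r s) = if s == r then (x r).+1 else x s.
Proof.
move=> h; rewrite /shift ffunE; case: (s =P r) => // _.
rewrite val_insubd; case: ifP => //; lia.
Qed.

Lemma sum_shift (T : Type) (F : 'I_d -> nat -> T -> R) (x : point n d) (t : T) r :
  (x r < n.-1)%N ->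
  \sum_s F s (shift x r s) t = F r (x r).+1 t + \sum_(s | s != r) F s (x s) t.
Proof.
move=> h; rewrite (bigD1 r) //= shiftE // eqxx; congr (_ + _).
by apply: eq_bigr => s /negPf hs; rewrite shiftE // hs.
Qed.

Lemma bigD1r (F : 'I_d -> R) r :
  \sum_s F s = F r + \sum_(s | s != r) F s.
Proof. by rewrite (bigD1 r). Qed.

Lemma bigD1n (F : 'I_d -> nat) r :
  (\sum_s F s = F r + \sum_(s | s != r) F s)%N.
Proof. by rewrite (bigD1 r). Qed.

Lemma sum_shiftR (x y : point n d) r : (y r < n.-1)%N ->
  \sum_s g s (x s) (shift y r s) = g r (x r) (y r).+1 + \sum_(s | s != r) g s (x s) (y s).
Proof.
move=> h; rewrite (bigD1 r) //= shiftE // eqxx; congr (_ + _).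
by apply: eq_bigr => s /negPf hs; rewrite shiftE // hs.
Qed.

Lemma sum_shiftL (x y : point n d) r : (x r < n.-1)%N ->
  \sum_s g s (shift x r s) (y s) = g r (x r).+1 (y r) + \sum_(s | s != r) g s (x s) (y s).
Proof.
move=> h; rewrite (bigD1 r) //= shiftE // eqxx; congr (_ + _).
by apply: eq_bigr => s /negPf hs; rewrite shiftE // hs.
Qed.

Definition meas (x y : point n d) : nat := \sum_r (x r - y r + (y r - x r))%N.

Lemma sum_shiftN (F : 'I_d -> nat -> nat) (x : point n d) r :
  (x r < n.-1)%N ->
  (\sum_s F s (shift x r s) = F r (x r).+1 + \sum_(s | s != r) F s (x s))%N.
Proof.
move=> h; rewrite (bigD1 r) //= shiftE // eqxx; congr (_ + _)%N.
by apply: eq_bigr => s /negPf hs; rewrite shiftE // hs.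
Qed.

End S.

Theorem lemma2p2 (R : realType) (n d : nat) (l u : 'I_d -> nat -> R)
  (hB : bounding_family n l u) (f : point n d -> R) :
  in_PB l u f <-> (forall x y : point n d, f x - f y <= dB l u x y).
Proof.
split.
- move=> hP.
  suff H : forall k x y, @meas n d x y = k -> f x - f y <= dB l u x y.
    by move=> x y; apply: (H _ x y erefl).
  elim=> [|k IH] x y hm.
  + have -> : x = y.
      apply/ffunP => r; apply/val_inj/eqP; move: hm; rewrite /meas.
      move/eqP; rewrite sum_nat_eq0 => /forallP /(_ r) /implyP /(_ isT) => ?.
      change (nat_of_ord (x r) == nat_of_ord (y r)); lia.
    by rewrite subrr dBE; apply/eqP; rewrite eq_le sumr_ge0 ?big1 //;
       move=> r _; rewrite g_aa.
  + case: (pickP (fun r => x r != y r)) => [r hr|h0]; last first.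
      have -> : x = y by apply/ffunP => r; apply/val_inj/eqP; move: (h0 r) => /= /negbFE.
      by rewrite subrr dBE big1 // => r _; rewrite g_aa.
    case: (ltngtP (y r) (x r)) => hxy; last by move/val_inj: hxy => e; rewrite e eqxx in hr.
    * have hy : (y r < n.-1)%N by have := ltn_ord (x r); lia.
      have hm' : @meas n d x (shift y r) = k.
        move: hm; rewrite /meas (@bigD1n d _ r).
        rewrite (@sum_shiftN n d (fun s b => (x s - b + (b - x s))%N)) //.
        move=> e; lia.
      have /andP[_ h1] := hP r y hy; have h2 := IH _ _ hm'.
      rewrite !dBE in h2 *.
      rewrite (@sum_shiftR R n d l u x y r hy) in h2.
      rewrite (@bigD1r R d _ r) (@g_stepu R d l u _ _ _ hxy).
      lra.
    * have hx : (x r < n.-1)%N by have := ltn_ord (y r); lia.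
      have hm' : @meas n d (shift x r) y = k.
        move: hm; rewrite /meas (@bigD1n d _ r).
        rewrite (@sum_shiftN n d (fun s b => (b - y s + (y s - b))%N)) //.
        move=> e; lia.
      have /andP[h1 _] := hP r x hx; have h2 := IH _ _ hm'.
      rewrite !dBE in h2 *.
      rewrite (@sum_shiftL R n d l u x y r hx) in h2.
      rewrite (@bigD1r R d _ r) (@g_stepl R d l u _ _ _ hxy).
      lra.
- move=> H r x hx.
  have e1 := H (shift x r) x; have e2 := H x (shift x r).
  rewrite !dBE in e1 e2.
  rewrite (@sum_shiftL R n d l u x x r hx) in e1.
  rewrite (@sum_shiftR R n d l u x x r hx) in e2.
  rewrite (eq_bigr (fun _ => 0)) ?big1_eq in e1; last by move=> s _; rewrite g_aa.
  rewrite (eq_bigr (fun _ => 0)) ?big1_eq in e2; last by move=> s _; rewrite g_aa.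
  rewrite (@g_stepu R d l u _ _ _ (ltnSn _)) g_aa in e1.
  rewrite (@g_stepl R d l u _ _ _ (ltnSn _)) g_aa in e2.
  apply/andP; split; lra.
Qed.
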